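(* For each $n$, consider the functions ${\operatorname{mr}}_+,\ {\operatorname{mr}}:\mathbf S_{n,+}\to\{0,1,\dots,n\}$ defined by \[{\operatorname{mr}}_+(\Sigma)=\min\{\operatorname{rank}(\hat\Sigma)\mid \Sigma=\tilde\Sigma+\hat\Sigma,\ \tilde\Sigma\ge 0,\ \hat\Sigma\ge 0,\ \tilde\Sigma\text{ diagonal}\},\] \[{\operatorname{mr}}(\Sigma)=\min\{\operatorname{rank}(\hat\Sigma)\mid \Sigma=\tilde\Sigma+\hat\Sigma,\ \hat\Sigma\ge 0,\ \tilde\Sigma\text{ diagonal}\}\] (in the second, $\tilde\Sigma$ is a real diagonal matrix not required to be positive semidefinite). Then ${\operatorname{mr}}_+$ is lower semicontinuous, whereas ${\operatorname{mr}}$ is not lower semicontinuous (in general).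
   Context: $\mathbf S_n$ denotes the real symmetric $n\times n$ matrices and $\mathbf S_{n,+}$ the positive semidefinite ones; $M\ge 0$ means $M$ is positive semidefinite. All matrices $\tilde\Sigma,\hat\Sigma$ are real symmetric $n\times n$. *)

(* Defs.v *)
From HB Require Import structures.
From mathcomp Require Import all_boot all_order all_algebra.
From mathcomp Require Import boolp reals.
Set Implicit Arguments. Unset Strict Implicit. Unset Printing Implicit Defensive.
Import Order.TTheory GRing.Theory Num.Theory.
Local Open Scope ring_scope.

Definition psd (R : realType) (n : nat) (M : 'M[R]_n) : Prop :=
  M^T = M /\ forall v : 'rV[R]_n, 0 <= (v *m M *m v^T) 0 0.

(* k is an attainable rank in the definition of mr_+ (pos = true) or mr (pos = false) *)
Definition mr_feasible (R : realType) (n : nat) (pos : bool) (S : 'M[R]_n) (k : nat) : bool :=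
  `[< exists Dt Dh : 'M[R]_n,
        [/\ S = Dt + Dh, is_diag_mx Dt, (pos -> psd Dt), psd Dh & \rank Dh = k] >].

(* minimum of the feasible ranks (0 if there are none, which never happens on S_{n,+}) *)
Definition mr_gen (R : realType) (n : nat) (pos : bool) (S : 'M[R]_n) : nat :=
  match pselect (exists k, mr_feasible pos S k) with
  | left h => ex_minn h
  | right _ => 0%N
  end.

Definition mr_plus (R : realType) (n : nat) (S : 'M[R]_n) : nat := mr_gen true S.
Definition mr (R : realType) (n : nat) (S : 'M[R]_n) : nat := mr_gen false S.

Definition lsc_on_psd (R : realType) (n : nat) (f : 'M[R]_n -> nat) : Prop :=
  forall S : 'M[R]_n, psd S ->
    exists2 e : R, 0 < e &
      forall S' : 'M[R]_n, psd S' -> (forall i j, `|S' i j - S i j| < e) ->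
        (f S <= f S')%N.

(* Main.v *)
Require Import Defs.
From HB Require Import structures.
From mathcomp Require Import all_boot all_order all_algebra.
From mathcomp Require Import boolp reals.
From mathcomp Require Import all_classical all_reals all_analysis.
From mathcomp Require Import ring lra.
Set Implicit Arguments. Unset Strict Implicit. Unset Printing Implicit Defensive.
Import Order.TTheory GRing.Theory Num.Theory.
Import numFieldNormedType.Exports.
Local Open Scope ring_scope.
Section Aux.
Variable R : realType.

Lemma mulmx3_bound a b c d (P : 'M[R]_(a,b)) (E : 'M[R]_(b,c)) (Q : 'M[R]_(c,d)) (dl : R) i j :
  (forall k l, `|E k l| <= dl) ->
  `|(P *m E *m Q) i j| <= dl * (\sum_k `|P i k|) * (\sum_l `|Q l j|).
Proof.
move=> HE; rewrite mxE; apply: le_trans (ler_norm_sum _ _ _) _.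
rewrite mulr_sumr; apply: ler_sum => l _.
rewrite mxE normrM ler_wpM2r //.
apply: le_trans (ler_norm_sum _ _ _) _.
rewrite mulr_sumr; apply: ler_sum => k _.
rewrite normrM mulrC ler_wpM2r //.
Qed.

Lemma sum_ge_term (I : finType) (F : I -> R) i0 : (forall i, 0 <= F i) -> F i0 <= \sum_i F i.
Proof.
move=> H; rewrite (bigD1 i0) //= lerDl sumr_ge0 // => i _.
Qed.

Lemma row_free_1N k (N : 'M[R]_k) (eta : R) :
  (forall i j, `|N i j| <= eta) -> k%:R * eta < 1 -> row_free (1%:M + N).
Proof.
move=> HN Hk; rewrite -kermx_eq0; apply/eqP/matrixP => i0 j0.
set K := kermx _.
have Hv : forall i, row i K *m (1%:M + N) = 0.
  by move=> i; rewrite -row_mul mulmx_ker row0.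
suff Hz : forall i j, K i j = 0 by rewrite Hz mxE.
move=> i; set v := row i K.
have Hv' := Hv i; rewrite -/v mulmxDr mulmx1 in Hv'.
have Hvj : forall j, `|v 0 j| <= eta * \sum_l `|v 0 l|.
  move=> j; have : (v + v *m N) 0 j = 0 by rewrite Hv' mxE.
  rewrite mxE => /eqP; rewrite addr_eq0 => /eqP ->; rewrite normrN mxE.
  apply: le_trans (ler_norm_sum _ _ _) _.
  rewrite mulr_sumr; apply: ler_sum => l _; rewrite normrM mulrC ler_wpM2r //.
have Hs : \sum_l `|v 0 l| <= k%:R * eta * \sum_l `|v 0 l|.
  apply: le_trans (ler_sum _ (fun j _ => Hvj j)) _.
  by rewrite -mulr_sumr sumr_const card_ord mulrnAr -mulrA mulr_natl.
have Hs0 : \sum_l `|v 0 l| = 0.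
  apply/eqP; rewrite eq_le sumr_ge0 // andbT.
  have H0 : 0 <= \sum_l `|v 0 l| by apply: sumr_ge0.
  nra.
move=> j; have : `|v 0 j| = 0.
  apply/eqP; rewrite eq_le normr_ge0 andbT -Hs0; exact: sum_ge_term.
by move/eqP; rewrite normr_eq0 mxE => /eqP.
Qed.

Lemma rank_lsc m (A : 'M[R]_m) : exists2 dl : R, 0 < dl &
  forall B : 'M[R]_m, (forall i j, `|B i j - A i j| < dl) -> (\rank A <= \rank B)%N.
Proof.
have [P HP] := row_fullP (col_base_full A).
have [Q HQ] := row_freeP (row_base_free A).
have HPAQ : P *m A *m Q = 1%:M.
  by rewrite -[X in P *m X](mulmx_base A) (mulmxA P (col_base A) (row_base A)) HP mul1mx HQ.
set CP := \sum_i \sum_k `|P i k|.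
set CQ := \sum_l \sum_j `|Q l j|.
have CP0 : 0 <= CP by apply: sumr_ge0 => i _; apply: sumr_ge0.
have CQ0 : 0 <= CQ by apply: sumr_ge0 => i _; apply: sumr_ge0.
set r0 := \rank A.
set D := (r0%:R + 1) * (CP + 1) * (CQ + 1).
have D0 : 0 < D by rewrite !mulr_gt0 // ltr_wpDl.
exists (D^-1); first by rewrite invr_gt0.
move=> B HB.
set N := P *m (B - A) *m Q.
have HN : forall i j, `|N i j| <= D^-1 * CP * CQ.
  have HE : forall k l, `|(B - A) k l| <= D^-1 by move=> k l; rewrite !mxE; apply: ltW; apply: HB.
  move=> i j; apply: le_trans (@mulmx3_bound _ _ _ _ P (B - A) Q _ i j HE) _.
  rewrite -!mulrA; apply: ler_wpM2l; first by rewrite invr_ge0 ltW.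
  apply: ler_pM; [by apply: sumr_ge0|by apply: sumr_ge0| |].
    by apply: (@sum_ge_term _ (fun i => \sum_k `|P i k|)) => i'; apply: sumr_ge0.
  by apply: ler_sum => l _; apply: (@sum_ge_term _ (fun j => `|Q l j|)).
have Hk : r0%:R * (D^-1 * CP * CQ) < 1.
  rewrite mulrCA -mulrA mulrC ltr_pdivrMr // mul1r /D.
  have r00 : 0 <= (r0%:R : R) by [].
  nra.
have := row_free_1N HN Hk.
rewrite /N mulmxBr mulmxBl HPAQ addrC subrK /row_free => /eqP Hr; rewrite /r0 -Hr.
by apply: leq_trans (mxrankM_maxl _ _) _; apply: mxrankM_maxr.
Qed.


Lemma quadB m (v : 'rV[R]_m) (A B : 'M[R]_m) :
  (v *m A *m v^T) 0 0 - (v *m B *m v^T) 0 0 = (v *m (A - B) *m v^T) 0 0.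
Proof.
have E : forall X Y : 'M[R]_1, (X - Y) 0 0 = X 0 0 - Y 0 0 by move=> X Y; rewrite !mxE.
by rewrite mulmxBr mulmxBl E.
Qed.

Lemma quad_bound m (v : 'rV[R]_m) (A : 'M[R]_m) (e : R) :
  (forall i j, `|A i j| <= e) ->
  `|(v *m A *m v^T) 0 0| <= e * (\sum_k `|v 0 k|) * (\sum_k `|v 0 k|).
Proof.
move=> H; apply: le_trans (mulmx3_bound v v^T 0 0 H) _.
suff -> : \sum_l `|v^T l 0| = \sum_k `|v 0 k| by [].
by apply: eq_bigr => l _; rewrite mxE.
Qed.

Lemma arith1 (x q e s : R) : 0 <= x -> q < 0 -> 0 < e -> e * (s * s + 1) = - q ->
  `|x - q| <= e * s * s -> False.
Proof.
move=> x0 q0 e0 He; rewrite ler_norml => /andP[h1 h2]; nra.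
Qed.

Lemma psd_closed m (H0 : 'M[R]_m) : H0^T = H0 ->
  (forall e : R, 0 < e -> exists H, psd H /\ forall i j, `|H i j - H0 i j| < e) -> psd H0.
Proof.
move=> Hs Hc; split => // v.
rewrite leNgt; apply/negP => Hq.
pose s := \sum_k `|v 0 k|.
have s0 : 0 <= s by apply: sumr_ge0.
pose e := - (v *m H0 *m v^T) 0 0 / (s * s + 1).
have ss0 : 0 < s * s + 1 by rewrite ltr_wpDl // mulr_ge0.
have e0 : 0 < e by rewrite divr_gt0 // oppr_gt0.
have He : e * (s * s + 1) = - (v *m H0 *m v^T) 0 0 by rewrite /e mulrVK // unitfE gt_eqF.
have [H [[_ HH] Hclose]] := Hc e e0.
have Hb' : `|(v *m (H - H0) *m v^T) 0 0| <= e * s * s.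
  apply: quad_bound => i j; rewrite !mxE; exact: ltW.
rewrite -quadB in Hb'.
exact: (arith1 (HH v) Hq e0 He Hb').
Qed.
End Aux.

Section SC.
Local Open Scope classical_set_scope.
Lemma seq_cluster (R : realType) m (lo hi : 'I_m -> R) (d : nat -> 'rV[R]_m) :
  (forall k i, lo i <= d k ord0 i <= hi i) ->
  exists c : 'rV[R]_m, (forall i, lo i <= c ord0 i) /\ forall e : R, 0 < e -> forall N : nat,
    exists2 k : nat, (N <= k)%N & forall i, `|d k ord0 i - c ord0 i| < e.
Proof.
move=> Hd.
set K := [set v : 'rV[R]_m | forall i, `[lo i, hi i] (v ord0 i)].
have cK : compact K := @rV_compact _ m (fun i => `[lo i, hi i]) (fun i => @segment_compact R (lo i) (hi i)).
have FK : (d @ \oo) K.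
  by exists 0%N => // k _ i /=; rewrite in_itv /=; apply: Hd.
have [c [Kc Hc]] := cK _ _ FK.
exists c; split.
  by move=> i; have := Kc i; rewrite /= in_itv /= => /andP[].
move=> e e0 N.
have FA : (d @ \oo) [set x | exists2 k, (N <= k)%N & x = d k].
  by apply: filterS (nbhs_infty_ge N) => k Hk /=; exists k.
have [x [[k Hk ->] Hb]] := Hc _ _ FA (nbhsx_ballx c e e0).
exists k => // i.
move: Hb; rewrite /ball /= => -[_ /(_ ord0 i)].
by rewrite /ball /= distrC.
Qed.
End SC.

Section Main.
Variable R : realType.

Lemma quad_delta m (A : 'M[R]_m) i : ((delta_mx 0 i : 'rV[R]_m) *m A *m (delta_mx 0 i : 'rV[R]_m)^T) 0 0 = A i i.
Proof. by rewrite -rowE trmx_delta -colE !mxE. Qed.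

Lemma psd0 m : psd (0 : 'M[R]_m).
Proof. by split; [rewrite trmx0 | move=> v; rewrite mulmx0 mul0mx mxE]. Qed.

Lemma psd_diag m (c : 'rV[R]_m) : (forall i, 0 <= c 0 i) -> psd (diag_mx c).
Proof.
move=> Hc; split; first exact: tr_diag_mx.
move=> v; rewrite mul_mx_diag mxE; apply: sumr_ge0 => j _; rewrite !mxE.
have := Hc j; nra.
Qed.

Lemma feas_psd pos m (S : 'M[R]_m) : psd S -> mr_feasible pos S (\rank S).
Proof.
move=> HS; apply/asboolP; exists 0, S; split => //; first by rewrite add0r.
  by apply/is_diag_mxP => i j _; rewrite mxE.
by move=> _; apply: psd0.
Qed.

Lemma mr_gen_min pos m (S : 'M[R]_m) k : mr_feasible pos S k -> (mr_gen pos S <= k)%N.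
Proof.
move=> Hk; rewrite /mr_gen; case: pselect => [h|[]]; last by exists k.
by case: ex_minnP => k0 _; apply.
Qed.

Lemma mr_gen_feas pos m (S : 'M[R]_m) : psd S -> mr_feasible pos S (mr_gen pos S).
Proof.
move=> HS; rewrite /mr_gen; case: pselect => [h|[]]; last by exists (\rank S); apply: feas_psd.
by case: ex_minnP.
Qed.

Lemma rank_closed m (H0 : 'M[R]_m) r :
  (forall e : R, 0 < e -> exists H : 'M[R]_m, (\rank H < r)%N /\ forall i j, `|H i j - H0 i j| < e) ->
  (\rank H0 < r)%N.
Proof.
move=> Hc; have [dl dl0 Hdl] := rank_lsc H0.
have [H [Hr Hcl]] := Hc dl dl0.
exact: leq_ltn_trans (Hdl H Hcl) Hr.
Qed.

Lemma lsc_plus m : lsc_on_psd (@mr_plus R m).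
Proof.
move=> S HS.
case: (pselect (exists2 e : R, 0 < e & forall S' : 'M[R]_m, psd S' ->
   (forall i j, `|S' i j - S i j| < e) -> (mr_plus S <= mr_plus S')%N)) => // Hno; exfalso.
pose r := mr_plus S.
have Hseq : forall k : nat, exists p : 'M[R]_m * 'M[R]_m,
   [/\ forall i j, `|p.1 i j - S i j| < k.+1%:R^-1, is_diag_mx p.2, psd p.2,
       psd (p.1 - p.2) & (\rank (p.1 - p.2)%R < r)%N].
  move=> k; apply: contrapT => Hk; apply: Hno.
  exists (k.+1%:R^-1); first by rewrite invr_gt0 ltr0Sn.
  move=> S' HS' Hc; rewrite leqNgt; apply/negP => Hlt; apply: Hk.
  have /asboolP [Dt [Dh [E Hd Hp Hh Hr]]] := mr_gen_feas true HS'.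
  exists (S', Dt); split => //=; first exact: Hp.
    by rewrite E addrC addKr.
  by rewrite E addrC addKr Hr.
have [f Hf] := choice Hseq.
pose d k := \row_i (f k).2 i i.
have Hb : forall k i, 0 <= d k ord0 i <= S i i + 1.
  move=> k i; have [Hc Hd Hp Hh Hr] := Hf k; rewrite mxE.
  have h1 := Hp.2 (delta_mx 0 i); rewrite quad_delta in h1.
  have h2 := Hh.2 (delta_mx 0 i); rewrite quad_delta !mxE in h2.
  have h3 := Hc i i; rewrite ltr_norml in h3; case/andP: h3 => _ h3.
  have h4 : k.+1%:R^-1 <= (1 : R) by rewrite invf_le1 // ?ler1n ?ltr0Sn.
  rewrite h1 /=; rewrite subr_ge0 in h2; apply: (le_trans h2).
  by have := lt_le_trans h3 h4; rewrite ltrBlDl => /ltW.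
have [c [Hc0 Hc]] := seq_cluster Hb.
pose Hs := S - diag_mx c.
have Happ : forall e : R, 0 < e -> exists k, forall i j,
    `|((f k).1 - (f k).2) i j - Hs i j| < e.
  move=> e e0.
  have e2 : 0 < e / 2 by rewrite divr_gt0.
  case: (near_infty_natSinv_lt (PosNum e2)) => N _ HN.
  have [k Hk Hck] := Hc (e / 2) e2 N.
  exists k => i j.
  have [Hc1 Hd Hp Hh Hr] := Hf k.
  have -> : ((f k).1 - (f k).2) i j - Hs i j =
            ((f k).1 i j - S i j) - ((f k).2 i j - diag_mx c i j) by rewrite !mxE; ring.
  have Ha : `|(f k).1 i j - S i j| < e / 2.
    apply: lt_le_trans (Hc1 i j) _.
    have := HN N (leqnn N); rewrite /= => HN'.
    apply: le_trans (ltW HN').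
    by rewrite lef_pV2 ?posrE // ler_nat ltnS.
  have Hb2 : `|(f k).2 i j - diag_mx c i j| < e / 2.
    have [<-|nij] := eqVneq i j.
      by have := Hck i; rewrite !mxE eqxx mulr1n.
    by rewrite (is_diag_mxP Hd i j nij) mxE (negbTE nij) mulr0n subrr normr0.
  apply: le_lt_trans (ler_normB _ _) _.
  by rewrite [e]splitr ltrD.
have HsT : Hs^T = Hs by rewrite /Hs raddfB /= tr_diag_mx HS.1.
have Hpsd : psd Hs.
  apply: psd_closed => // e e0; have [k Hk] := Happ e e0.
  by exists ((f k).1 - (f k).2); have [] := Hf k.
have Hrank : (\rank Hs < r)%N.
  apply: rank_closed => e e0; have [k Hk] := Happ e e0.
  by exists ((f k).1 - (f k).2); have [] := Hf k.
have Hfe : mr_feasible true S (\rank Hs).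
  apply/asboolP; exists (diag_mx c), Hs; split => //.
  - by rewrite /Hs addrC subrK.
  - by move=> _; apply: psd_diag.
have := mr_gen_min Hfe; rewrite -/(mr_plus S) -/r.
by rewrite leqNgt Hrank.
Qed.

End Main.

Section Ex.
Variable R : realType.

Definition M3 (a : R) : 'M[R]_3 :=
  \matrix_(i < 3, j < 3) (if i == j then 2 else if ((i : nat) + j == 3)%N then a else 1).

Lemma M3_psd a : 0 <= a <= 1 -> psd (M3 a).
Proof.
move=> /andP[a0 a1]; split.
  by apply/matrixP => i j; rewrite !mxE eq_sym addnC.
move=> v; rewrite !mxE !big_ord_recr !big_ord0 /= !mxE !big_ord_recr !big_ord0 /= !mxE /=.
set x := v _ (widen_ord _ (widen_ord _ _)).
set y := v _ (widen_ord _ ord_max).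
set z := v _ ord_max.
have sq : forall u : R, 0 <= u * u by move=> u; rewrite -expr2 sqr_ge0.
have a1' : 0 <= 1 - a by rewrite subr_ge0.
have h1 := mulr_ge0 a0 (sq (y + z)).
have h2 := mulr_ge0 a1' (sq y).
have h3 := mulr_ge0 a1' (sq z).
have h4 := sq (x + y).
have h5 := sq (x + z).
nra.
Qed.

Lemma M3_feas1 (t : R) : t != 0 -> mr_feasible false (M3 (t * t)) 1.
Proof.
move=> t0.
pose v : 'rV[R]_3 := \row_j (if j == 0 then t^-1 else t).
pose Dh := v^T *m v.
apply/asboolP; exists (M3 (t * t) - Dh), Dh; split => //.
- by rewrite subrK.
- apply/is_diag_mxP => i j nij; rewrite !mxE big_ord1 !mxE.
  case: i nij => [[|[|[|//]]]] Hi; case: j => [[|[|[|//]]]] Hj //= _;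
  rewrite /= ?mulVf ?divff // ?subrr //.
- split; first by rewrite /Dh trmx_mul trmxK.
  move=> w; rewrite /Dh.
  have -> : w *m (v^T *m v) *m w^T = (w *m v^T) *m (w *m v^T)^T.
    by rewrite trmx_mul trmxK !mulmxA.
  have E1 : forall X : 'M[R]_1, (X *m X^T) 0 0 = X 0 0 * X 0 0 by move=> X; rewrite mxE big_ord1 mxE.
  by rewrite E1 -expr2 sqr_ge0.
- apply/eqP; rewrite eqn_leq; apply/andP; split.
    by apply: leq_trans (mxrankM_maxl _ _) _; apply: rank_leq_col.
  rewrite lt0n mxrank_eq0; apply/negP => /eqP/matrixP/(_ 0 0).
  rewrite !mxE big_ord1 !mxE /= => /eqP; rewrite mulf_eq0 invr_eq0 orbb.
  by apply/negP.
Qed.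


Lemma M3_rank2 (Dt Dh : 'M[R]_3) : M3 0 = Dt + Dh -> is_diag_mx Dt -> (2 <= \rank Dh)%N.
Proof.
move=> E Hd.
have EDt : Dt = diag_mx (\row_i Dt i i).
  apply/matrixP => i j; rewrite !mxE; case: eqVneq => [->|nij].
    by rewrite mulr1n.
  by rewrite mulr0n (is_diag_mxP Hd).
have EDh : Dh = M3 0 - diag_mx (\row_i Dt i i) by rewrite -EDt E addrC addKr.
pose a := Dt 0 0.
pose P : 'M[R]_(2,3) := \matrix_(i, j) ((i : nat) == j)%:R.
pose Q : 'M[R]_(3,2) := \matrix_(i, j) (if (i : nat) == 2%N then (if (j : nat) == 0%N then 1 else - (2 - a))
   else if ((i : nat) == 0%N) && ((j : nat) == 1%N) then 1 else 0).
have HPQ : P *m Dh *m Q = 1%:M.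
  apply/matrixP => i j; rewrite EDh /Q /P /a !mxE.
  rewrite !big_ord_recr !big_ord0 /= !mxE.
  rewrite !big_ord_recr !big_ord0 /= !mxE.
  have -> : widen_ord (leqnSn 2) (widen_ord (leqnSn 1) ord_max) = 0 :> 'I_3 by apply: val_inj.
  case: i => [[|[|//]]] Hi; case: j => [[|[|//]]] Hj /=; rewrite ?mulr0n ?mulr1n; ring.
have : (2 <= \rank (P *m Dh *m Q))%N by rewrite HPQ mxrank1.
move=> H2; apply: leq_trans H2 _.
by apply: leq_trans (mxrankM_maxl _ _) _; apply: mxrankM_maxr.
Qed.

Lemma not_lsc : ~ lsc_on_psd (@mr R 3).
Proof.
move=> H.
have p0 : psd (M3 0) by apply: M3_psd; rewrite lexx ler01.
have [e e0 He] := H (M3 0) p0.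
pose t := Num.min 1 e / 2.
have m1 : Num.min 1 e <= 1 by rewrite ge_min lexx.
have me : Num.min 1 e <= e by rewrite ge_min lexx orbT.
have mp : 0 < Num.min 1 e by rewrite lt_min ltr01 e0.
have t0 : 0 < t by rewrite divr_gt0.
have tt1 : t * t <= 1 by rewrite /t; nra.
have tte : t * t < e by rewrite /t; nra.
have ptt : psd (M3 (t * t)) by apply: M3_psd; rewrite tt1 andbT mulr_ge0 // ltW.
have := He (M3 (t * t)) ptt.
have Hcl : forall i j, `|M3 (t * t) i j - M3 0 i j| < e.
  move=> i j; rewrite !mxE; case: ifP => _; first by rewrite subrr normr0.
  case: ifP => _; last by rewrite subrr normr0.
  by rewrite subr0 ger0_norm // mulr_ge0 // ltW.
move=> /(_ Hcl) H1.
have h1 : (mr (M3 (t * t)) <= 1)%N by apply: mr_gen_min; apply: M3_feas1; rewrite gt_eqF.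
have /asboolP [Dt [Dh [E Hd _ _ Hr]]] := mr_gen_feas false p0.
have h2 := M3_rank2 E Hd; rewrite Hr in h2.
have := leq_trans h2 (leq_trans H1 h1).
by [].
Qed.

End Ex.

Theorem proposition1 (R : realType) :
  (forall n : nat, lsc_on_psd (@mr_plus R n)) /\
  (exists n : nat, ~ lsc_on_psd (@mr R n)).
Proof.
split; first by move=> n; apply: lsc_plus.
by exists 3%N; apply: not_lsc.
Qed.
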